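(* For every $n\ge 1$: (1) $|C^*_{n+1}| = \sum_{k=0}^{n-1} [b^k a^{n-1-k}]$; (2) $|C^*_{n+1}| \le \alpha_n \le |C^*_{n+1}| + |C^*_{n+2}| \le 2|C^*_{n+2}|$.
   Context: For $\pi \in S_m$, a pair $1\le i<j\le m$ is a stretching pair if $\pi(i) < i < j < \pi(j)$; $C^*_m$ is the set of $m$-cycles (permutations of $[m]$ consisting of one cycle of length $m$) with no stretching pairs. For non-negative integers $p+q=n-1$, $[b^p a^q]$ is the number of $\pi \in S_n$ such that, for $i\in[n-1]$, $\pi(i)>i$ iff $i \in\{1,\dots,p\}$. $\alpha_n$ is the number of $\pi \in S_n$ for which there are no indices $1\le i<i+1<j<j+1\le n$ with $\pi(i+1)<\pi(i)<\pi(j)<\pi(j+1)$ (pattern $21\text{-}34$) and no such indices with $\pi(j+1)<\pi(j)<\pi(i)<\pi(i+1)$ (pattern $34\text{-}21$). *)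

(* Defs.v *)
From mathcomp Require Import all_boot all_fingroup.
Set Implicit Arguments. Unset Strict Implicit. Unset Printing Implicit Defensive.

(* Permutations of [m] are encoded as {perm 'I_m}, i.e. 0-based: the
   1-based value pi(i) corresponds to (s (i-1)) + 1. All conditions below
   are comparisons, hence invariant under this shift. *)

Definition is_full_cycle (m : nat) (s : {perm 'I_m}) : bool :=
  #|porbits s| == 1.

Definition stretching_pair (m : nat) (s : {perm 'I_m}) (i j : 'I_m) : bool :=
  [&& (nat_of_ord i < nat_of_ord j)%N,
      (nat_of_ord (s i) < nat_of_ord i)%N &
      (nat_of_ord j < nat_of_ord (s j))%N].

Definition Cstar (m : nat) : {set {perm 'I_m}} :=
  [set s : {perm 'I_m} | is_full_cycle s &&
     ~~ [exists i : 'I_m, exists j : 'I_m, stretching_pair s i j]].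

(* [b^p a^q] with p + q = n - 1: number of pi in S_n such that for
   i in [n-1] (1-based), pi(i) > i iff i in {1..p}.
   0-based: for i < n-1, s i > i iff i < p. *)
Definition bacount (n p : nat) : nat :=
  #|[set s : {perm 'I_n} |
      [forall i : 'I_n, (nat_of_ord i < n.-1)%N ==>
         ((nat_of_ord i < nat_of_ord (s i))%N == (nat_of_ord i < p)%N)]]|.

(* value of a permutation at a nat position (0 outside the range) *)
Definition pv (n : nat) (s : {perm 'I_n}) (k : nat) : nat :=
  if insub k is Some i then nat_of_ord (s i) else 0.

(* occurrence of 21-34 or 34-21 at (0-based) positions i, i+1, j, j+1
   with i+1 < j and j+1 <= n-1 *)
Definition bad_occ (n : nat) (s : {perm 'I_n}) (i j : nat) : bool :=
  [&& (i.+1 < j)%N, (j.+1 < n)%N &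
      ([&& (pv s i.+1 < pv s i)%N, (pv s i < pv s j)%N & (pv s j < pv s j.+1)%N]
    || [&& (pv s j.+1 < pv s j)%N, (pv s j < pv s i)%N & (pv s i < pv s i.+1)%N])].

Definition alpha (n : nat) : nat :=
  #|[set s : {perm 'I_n} |
      ~~ [exists i : 'I_n, exists j : 'I_n, bad_occ s i j]]|.

(* Main.v *)
Require Import Defs.
From mathcomp Require Import all_boot all_fingroup.
From mathcomp Require Import zify.
Set Implicit Arguments. Unset Strict Implicit. Unset Printing Implicit Defensive.

Lemma pvE n (s : {perm 'I_n}) (i : 'I_n) : pv s i = s i.
Proof. by rewrite /pv; case: insubP => [j _ /val_inj -> | ]; rewrite ?ltn_ord. Qed.

Lemma pv_lt n (s : {perm 'I_n}) k : k < n -> pv s k < n.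
Proof. move=> hk; rewrite /pv; case: insubP => [j _ _ |]; rewrite ?ltn_ord //; lia. Qed.

Lemma pv_inj n (s : {perm 'I_n}) a b : a < n -> b < n -> pv s a = pv s b -> a = b.
Proof.
move=> ha hb; have := pvE s (Ordinal ha); have := pvE s (Ordinal hb).
by move=> /= -> -> /val_inj/perm_inj [].
Qed.

Definition asc n (s : {perm 'I_n}) a := (a.+1 < n) && (pv s a < pv s a.+1).
Definition des n (s : {perm 'I_n}) a := (a.+1 < n) && (pv s a.+1 < pv s a).

Definition sepb n (s : {perm 'I_n}) :=
  [forall a : 'I_n, forall b : 'I_n, asc s a ==> des s b ==> (pv s a < pv s b)].
Definition cls1 n (s : {perm 'I_n}) :=
  sepb s && [forall a : 'I_n, asc s a ==> (pv s a < pv s n.-1)].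

Lemma sepbP n (s : {perm 'I_n}) :
  reflect (forall a b, asc s a -> des s b -> pv s a < pv s b) (sepb s).
Proof.
apply: (iffP forallP) => [H a b ha hb | H a].
  have la : a < n by case/andP: ha => /ltnW.
  have lb : b < n by case/andP: hb => /ltnW.
  by have := forallP (H (Ordinal la)) (Ordinal lb); rewrite /= ha hb.
by apply/forallP => b; apply/implyP => ha; apply/implyP => hb; apply: H.
Qed.

Lemma cls1P n (s : {perm 'I_n}) :
  reflect ((forall a b, asc s a -> des s b -> pv s a < pv s b) /\
           (forall a, asc s a -> pv s a < pv s n.-1)) (cls1 s).
Proof.
apply: (iffP andP) => [[/sepbP H1 /forallP H2] | [H1 H2]]; split.
- exact: H1.
- move=> a ha; have la : a < n by case/andP: ha => /ltnW.
  by have := H2 (Ordinal la); rewrite /= ha.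
- exact/sepbP.
- by apply/forallP => a; apply/implyP; apply: H2.
Qed.

Lemma alphaE n : alpha n = #|[set s : {perm 'I_n} | sepb s]|.
Proof.
rewrite /alpha; apply: eq_card => s; rewrite !inE.
apply/idP/idP.
- move=> H; apply/sepbP => a b ha hb.
  case/andP: (ha) => la ha'; case/andP: (hb) => lb hb'.
  rewrite ltnNge leq_eqVlt; apply/negP => /orP [/eqP E | lt].
  + by move: (pv_inj (ltnW lb) (ltnW la) E) => eab; subst b; move: ha' hb'; lia.
  + apply: (negP H).
    have [ab | ba] := ltnP (a.+1) b.
    * apply/existsP; exists (Ordinal (ltnW la)); apply/existsP; exists (Ordinal (ltnW lb)).
      rewrite /bad_occ /= ab lb /=; apply/orP; right; rewrite hb' lt ha' //.
    * have [ba' | ab'] := ltnP (b.+1) a.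
      -- apply/existsP; exists (Ordinal (ltnW lb)); apply/existsP; exists (Ordinal (ltnW la)).
         rewrite /bad_occ /= ba' la /=; apply/orP; left; rewrite hb' lt ha' //.
      -- have : [|| a == b.+1, b == a.+1 | a == b] by move: ab' ba; clear; lia.
         case/or3P => /eqP E; subst; move: ha' hb' lt; lia.
- move/sepbP => H; apply/negP => /existsP [i /existsP [j]].
  case/and3P => ij jn /orP [/and3P [h1 h2 h3] | /and3P [h1 h2 h3]].
  + have hi : i.+1 < n by lia.
    have := H j i; rewrite /asc /des h1 h3 jn hi /= => /(_ isT isT); lia.
  + have hi : i.+1 < n by lia.
    have := H i j; rewrite /asc /des h1 h3 jn hi /= => /(_ isT isT); lia.
Qed.


Definition app n (s : {perm 'I_n}) : {perm 'I_n.+1} := lift_perm ord_max ord_max s.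
Definition pre n (s : {perm 'I_n}) : {perm 'I_n.+1} := lift_perm ord0 ord_max s.

Lemma pv_app_lt n (s : {perm 'I_n}) k : k < n -> pv (app s) k = pv s k.
Proof.
move=> hk; have := pvE (app s) (lift ord_max (Ordinal hk)).
by rewrite /app lift_perm_lift !lift_max /= => ->; rewrite (pvE s (Ordinal hk)).
Qed.

Lemma pv_app_n n (s : {perm 'I_n}) : pv (app s) n = n.
Proof. by have := pvE (app s) ord_max; rewrite /app lift_perm_id. Qed.

Lemma pv_pre0 n (s : {perm 'I_n}) : pv (pre s) 0 = n.
Proof. by have := pvE (pre s) ord0; rewrite /pre lift_perm_id. Qed.

Lemma pv_preS n (s : {perm 'I_n}) k : k < n -> pv (pre s) k.+1 = pv s k.
Proof.
move=> hk; have := pvE (pre s) (lift ord0 (Ordinal hk)).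
by rewrite /pre lift_perm_lift lift0 lift_max /= => ->; rewrite (pvE s (Ordinal hk)).
Qed.

Lemma app_inj n : injective (@app n).
Proof.
move=> s t E; apply/permP => k; apply: (@lift_inj _ ord_max).
by rewrite -(lift_perm_lift ord_max ord_max s) -(lift_perm_lift ord_max ord_max t) -/(app s) -/(app t) E.
Qed.

Lemma pre_inj n : injective (@pre n).
Proof.
move=> s t E; apply/permP => k; apply: (@lift_inj _ ord_max).
by rewrite -(lift_perm_lift ord0 ord_max s) -(lift_perm_lift ord0 ord_max t) -/(pre s) -/(pre t) E.
Qed.

Lemma asc_pre0 n (s : {perm 'I_n}) : asc (pre s) 0 = false.
Proof.
rewrite /asc pv_pre0; case: n s => [|n] s; first by [].

by rewrite pv_preS //; have := @pv_lt _ s 0 isT; lia.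
Qed.

Lemma asc_preS n (s : {perm 'I_n}) a : asc (pre s) a.+1 = asc s a.
Proof.
rewrite /asc ltnS; case: (ltnP a.+1 n) => h //=.
by rewrite !pv_preS //; lia.
Qed.

Lemma des_preS n (s : {perm 'I_n}) a : des (pre s) a.+1 = des s a.
Proof.
rewrite /des ltnS; case: (ltnP a.+1 n) => h //=.
by rewrite !pv_preS //; lia.
Qed.

Lemma cls1_pre n (s : {perm 'I_n}) : 0 < n -> cls1 s -> cls1 (pre s).
Proof.
move=> n0 /cls1P [H1 H2]; apply/cls1P; split.
- move=> [|a] b; first by rewrite asc_pre0.
  rewrite asc_preS => ha; have la : a.+1 < n by case/andP: ha.
  case: b => [|b] hb.
    by rewrite pv_pre0 pv_preS ?pv_lt //; lia.
  rewrite des_preS in hb; have lb : b.+1 < n by case/andP: hb.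
  by rewrite !pv_preS; [apply: H1 | lia | lia].
- move=> [|a]; first by rewrite asc_pre0.
  rewrite asc_preS => ha; have la : a.+1 < n by case/andP: ha.
  have -> : n.+1.-1 = (n.-1).+1 by lia.
  by rewrite !pv_preS; [apply: H2 | lia | lia].
Qed.

Lemma cls1_app n (s : {perm 'I_n}) : sepb s -> ~~ cls1 s -> cls1 (app s).
Proof.
move=> hs; rewrite /cls1 hs /= negb_forall => /existsP [a0].
rewrite negb_imply -leqNgt => /andP [ha0 hle].
move/sepbP: hs => H1.
have la0 : a0.+1 < n by case/andP: ha0.
apply/cls1P; split.
- move=> a b ha hb.
  have lb : b.+1 < n.
    case/andP: hb => lb h; rewrite ltnS leq_eqVlt in lb; case/orP: lb => [/eqP E | //].
    have bn : b < n by lia.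
    rewrite E pv_app_n pv_app_lt // in h; have := pv_lt s bn; lia.
  have hb' : des s b by move: hb; rewrite /des !pv_app_lt //; lia.
  case/andP: ha => la ha; rewrite ltnS leq_eqVlt in la.
  case/orP: la => [/eqP E | la'].
    have an : a < n by lia.
    have ea : a = n.-1 by lia.
    rewrite (pv_app_lt s an) (pv_app_lt s (ltnW lb)).
    have := H1 _ _ ha0 hb'; move: hle; rewrite -ea; lia.
  rewrite (pv_app_lt s la') (pv_app_lt s (ltnW la')) in ha.
  rewrite (pv_app_lt s (ltnW la')) (pv_app_lt s (ltnW lb)).
  by apply: H1; rewrite // /asc la'.
- move=> a ha; have la : a < n by case/andP: ha; lia.
  by rewrite /= pv_app_n pv_app_lt // pv_lt.
Qed.

Lemma alpha_le n : alpha n <= #|[set s : {perm 'I_n} | cls1 s]| + #|[set s : {perm 'I_n.+1} | cls1 s]|.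
Proof.
rewrite alphaE.
have -> : [set s : {perm 'I_n} | sepb s] =
  [set s | cls1 s] :|: [set s | sepb s && ~~ cls1 s].
  apply/setP => s; rewrite !inE; case hc: (cls1 s); rewrite ?orbF ?orbT ?andbT //=.
  by case/andP: hc.
apply: (leq_trans (leq_card_setU _ _)); rewrite leq_add2l.
rewrite -(card_imset _ (@app_inj n)); apply: subset_leq_card.
apply/subsetP => x /imsetP [s]; rewrite inE => /andP [h1 h2] ->.
by rewrite inE cls1_app.
Qed.

Lemma cls1_le n : 0 < n -> #|[set s : {perm 'I_n} | cls1 s]| <= #|[set s : {perm 'I_n.+1} | cls1 s]|.
Proof.
move=> n0; rewrite -(card_imset _ (@pre_inj n)); apply: subset_leq_card.
apply/subsetP => x /imsetP [s]; rewrite inE => h ->.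
by rewrite inE cls1_pre.
Qed.

Lemma cls1_sep n : #|[set s : {perm 'I_n} | cls1 s]| <= alpha n.
Proof.
rewrite alphaE; apply: subset_leq_card; apply/subsetP => s; rewrite !inE.
by case/andP.
Qed.


Lemma full_cycleP (T : finType) (c : {perm T}) x0 :
  reflect (forall x, x \in porbit c x0) (#|porbits c| == 1).
Proof.
apply: (iffP idP) => [/cards1P [A EA] x | H].
  have h1 : porbit c x \in porbits c by apply: imset_f.
  have h2 : porbit c x0 \in porbits c by apply: imset_f.
  rewrite EA !inE in h1 h2.
  by rewrite (eqP h2) -(eqP h1) porbit_id.
apply/cards1P; exists (porbit c x0); apply/setP => A; rewrite inE.
apply/imsetP/eqP => [[y _ ->] | ->]; last by exists x0.
by apply/eqP; rewrite eq_porbit_mem.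
Qed.

Definition rot n : {perm 'I_n.+1} := perm (@ordS_inj n.+1).
Definition Qp n (s : {perm 'I_n}) : {perm 'I_n.+1} := lift_perm ord0 ord0 s.
Definition Psi n (s : {perm 'I_n}) : {perm 'I_n.+1} := (rot n ^ Qp s)%g.

Lemma rotE n (t : 'I_n.+1) : val (rot n t) = if t < n then t.+1 else 0.
Proof.
rewrite /rot permE /= ; case: ifP => h.
  by rewrite modn_small //; lia.
have -> : (t : nat) = n by have := ltn_ord t; move/negbT: h; lia.
by rewrite modnn.
Qed.

Lemma rotE' n (t : 'I_n.+1) : nat_of_ord (rot n t) = if t < n then t.+1 else 0.
Proof. exact: rotE. Qed.

Lemma PsiQ n (s : {perm 'I_n}) t : Psi s (Qp s t) = Qp s (rot n t).
Proof. by rewrite /Psi permJ. Qed.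

Lemma Q0 n (s : {perm 'I_n}) : Qp s ord0 = ord0.
Proof. by rewrite /Qp lift_perm_id. Qed.

Lemma iter_Psi n (s : {perm 'I_n}) k : k < n.+1 -> iter k (Psi s) ord0 = Qp s (inord k).
Proof.
elim: k => [|k IH] hk.
  by rewrite /= -{1}(Q0 s); congr (Qp s _); apply: val_inj; rewrite /= inordK.
rewrite iterS IH; last lia.
rewrite PsiQ; congr (Qp s _); apply: val_inj; rewrite rotE /= !inordK; try lia.
by case: ltnP => h; lia.
Qed.

Lemma Q_iter n (s : {perm 'I_n}) (t : 'I_n.+1) : Qp s t = iter t (Psi s) ord0.
Proof. by rewrite iter_Psi // inord_val. Qed.

Lemma Psi_full n (s : {perm 'I_n}) : is_full_cycle (Psi s).
Proof.
apply/(full_cycleP _ ord0) => x; apply/porbitP.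
exists ((Qp s)^-1 x)%g; by rewrite permX -Q_iter permKV.
Qed.

Lemma Psi_inj n : injective (@Psi n).
Proof.
move=> s t E.
have EQ : Qp s = Qp t by apply/permP => u; rewrite !Q_iter E.
apply/permP => k; apply: (@lift_inj _ ord0).
by rewrite -(lift_perm_lift ord0 ord0 s) -(lift_perm_lift ord0 ord0 t) -/(Qp s) -/(Qp t) EQ.
Qed.

Definition qv n (s : {perm 'I_n}) k := if k is k'.+1 then (pv s k').+1 else 0.
Definition nx n k := if k < n then k.+1 else 0.

Lemma QvE n (s : {perm 'I_n}) (u : 'I_n.+1) : val (Qp s u) = qv s u.
Proof.
case: (unliftP ord0 u) => [j -> | ->]; last by rewrite Q0.
by rewrite /Qp lift_perm_lift !lift0 /= pvE.
Qed.

Lemma PsiQv n (s : {perm 'I_n}) (u : 'I_n.+1) : val (Psi s (Qp s u)) = qv s (nx n u).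
Proof. by rewrite PsiQ QvE rotE. Qed.

Definition SP n (s : {perm 'I_n}) u v :=
  [&& qv s u < qv s v, qv s (nx n u) < qv s u & qv s v < qv s (nx n v)].

Lemma spQ n (s : {perm 'I_n}) u v :
  stretching_pair (Psi s) (Qp s u) (Qp s v) = SP s u v.
Proof. by rewrite /stretching_pair !PsiQv !QvE. Qed.

Lemma qvS n (s : {perm 'I_n}) k : 0 < k -> qv s k = (pv s k.-1).+1.
Proof. by case: k. Qed.

Lemma SP_cls1 n (s : {perm 'I_n}) :
  (forall u v, u < n.+1 -> v < n.+1 -> ~~ SP s u v) <-> cls1 s.
Proof.
split => [H | /cls1P [H1 H2] u v hu hv].
  apply/cls1P; split.
    move=> a b ha hb; have la : a.+1 < n by case/andP: ha.
    have lb : b.+1 < n by case/andP: hb.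
    case: (ltngtP (pv s a) (pv s b)) => // h.
      have := H b.+1 a.+1; rewrite /SP /nx /= la lb /= !ltnS h.
      case/andP: ha => _ ->; case/andP: hb => _ ->.
      by move=> /(_ (ltnW lb) (ltnW la)).
    have E := pv_inj (ltnW la) (ltnW lb) h; subst b.
    by move: ha hb; rewrite /asc /des; lia.
  move=> a ha; have la : a.+1 < n by case/andP: ha.
  case: (ltngtP (pv s a) (pv s n.-1)) => // h.
    have := H n a.+1; rewrite /SP /nx /= la ltnn (qvS s (leq_ltn_trans (leq0n _) la)).
    rewrite /= !ltnS h; case/andP: ha => _ -> /=.
    by move=> /(_ (leqnn _) (ltnW la)).
  have := pv_inj (ltnW la) _ h; move: la; lia.
apply/negP; case: u hu => [|a] hu; first by rewrite /SP /nx /=; case: (0 < n); rewrite /= ?andbF.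
case: v hv => [|b] hv; first by rewrite /SP /=.
rewrite /SP /nx /= !ltnS.
case: (ltnP b.+1 n) => hb; last by rewrite /= ltn0 !andbF.
case: (ltnP a.+1 n) => ha /= H.
  move/and3P: H => [h1 h2 h3].
  have hab : asc s b by rewrite /asc hb /=; lia.
  have hd : des s a by rewrite /des ha /=; lia.
  have := H1 _ _ hab hd; lia.
move/andP: H => [h1 h3].
have ea : a = n.-1 by lia.
have hab : asc s b by rewrite /asc hb /=; lia.
have := H2 _ hab; rewrite -ea; lia.
Qed.

Lemma Psi_Cstar n (s : {perm 'I_n}) : (Psi s \in Cstar n.+1) = cls1 s.
Proof.
rewrite /Cstar inE Psi_full /=; apply/idP/idP => [H | H].
  apply/SP_cls1 => u v hu hv; apply/negP => hsp; apply: (negP H).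
  apply/existsP; exists (Qp s (Ordinal hu)); apply/existsP; exists (Qp s (Ordinal hv)).
  by rewrite spQ.
apply/negP => /existsP [i /existsP [j h]].
rewrite -(permKV (Qp s) i) -(permKV (Qp s) j) spQ in h.
by have := (proj2 (SP_cls1 s) H) _ _ (ltn_ord ((Qp s)^-1 i)%g) (ltn_ord ((Qp s)^-1 j)%g); rewrite h.
Qed.

Lemma Psi_onto n (c : {perm 'I_n.+1}) : is_full_cycle c -> exists s, c = Psi s.
Proof.
move/(full_cycleP _ ord0) => H.
have cardo : #|porbit c ord0| = n.+1.
  rewrite (_ : porbit c ord0 = setT) ?cardsT ?card_ord //.
  by apply/setP => x; rewrite inE H.
pose F (t : 'I_n.+1) := iter t c ord0.
have Finj : injective F.
  move=> a b; rewrite /F => E; apply: val_inj => /=.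
  have U := uniq_traject_porbit c ord0; rewrite cardo in U.
  have := nth_uniq ord0 _ _ U; rewrite size_traject => /(_ a b (ltn_ord a) (ltn_ord b)).
  by rewrite !nth_traject ?ltn_ord // E eqxx => /esym/eqP.
pose Fp := perm Finj.
have Fp0 : Fp ord0 = ord0 by rewrite permE.
have Fpne (k : 'I_n) : 0 < Fp (lift ord0 k).
  rewrite lt0n; apply/negP => /eqP h.
  have : Fp (lift ord0 k) = Fp ord0 by rewrite Fp0; apply: val_inj.
  by move/perm_inj => E; move: (neq_lift ord0 k); rewrite E eqxx.
have glt (k : 'I_n) : (Fp (lift ord0 k)).-1 < n.
  have := ltn_ord (Fp (lift ord0 k)); have := Fpne k; lia.
pose g (k : 'I_n) : 'I_n := Ordinal (glt k).
have gE k : val (g k) = (Fp (lift ord0 k)).-1 by [].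
have ginj : injective g.
  move=> a b E; have := congr1 val E; rewrite !gE => E'.
  have := Fpne a; have := Fpne b => ha hb.
  have : Fp (lift ord0 a) = Fp (lift ord0 b) by apply: val_inj => /=; lia.
  by move/perm_inj/lift_inj.
pose s := perm ginj.
have QF : Qp s = Fp.
  apply/permP => x; case: (unliftP ord0 x) => [k -> | ->]; last by rewrite Q0 Fp0.
  apply: val_inj; rewrite /Qp lift_perm_lift /= /bump add1n /s permE /=.
  have := Fpne k; lia.
exists s; apply/permP => x.
rewrite -(permKV Fp x); set y := (Fp^-1 x)%g.
rewrite -[in RHS]QF PsiQ QF !permE /F -iterS /=.
case: (ltnP y n) => h; first by rewrite modn_small.
have E : (y : nat) = n by have := ltn_ord y; move: h; lia.
by rewrite E modnn; have := iter_porbit c ord0; rewrite cardo /= => ->.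
Qed.

Lemma card_Cstar n : #|Cstar n.+1| = #|[set s : {perm 'I_n} | cls1 s]|.
Proof.
rewrite -(card_imset _ (@Psi_inj n)); apply: eq_card => c.
apply/idP/imsetP => [hc | [s]].
  have hf : is_full_cycle c by move: hc; rewrite inE => /andP [].
  have [s Es] := Psi_onto hf; exists s => //.
  by rewrite inE -Psi_Cstar -Es.
by rewrite inE => hs ->; rewrite Psi_Cstar.
Qed.


Section Foata.
Variable n : nat.
Implicit Types (s : {perm 'I_n}).

Definition lrm s k := [forall j : 'I_n, (j < k) ==> (pv s k < pv s j)].
Definition bs s k := \max_(j < n | (j <= k) && lrm s j) j.

Lemma lrmP s k : k < n -> reflect (forall j, j < k -> pv s k < pv s j) (lrm s k).
Proof.
move=> kn; apply: (iffP forallP) => [H j jk | H j]; last by apply/implyP => /H.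
have jn : j < n by lia.
by have := H (Ordinal jn); rewrite /= jk.
Qed.

Lemma lrm0 s : lrm s 0.
Proof. by apply/forallP. Qed.

Lemma bs_le s k : bs s k <= k.
Proof. by apply/bigmax_leqP => j /andP []. Qed.

Lemma bs_max s k j : j < n -> j <= k -> lrm s j -> j <= bs s k.
Proof.
move=> jn jk lj; have := @leq_bigmax_cond _ (fun j : 'I_n => (j <= k) && lrm s j) (fun j => nat_of_ord j) (Ordinal jn).
by rewrite /= jk lj => /(_ isT).
Qed.

Lemma bs_lrm s k : 0 < n -> lrm s (bs s k).
Proof.
move=> n0.
have := @eq_bigmax_cond _ [pred j : 'I_n | (j <= k) && lrm s j] (fun j => nat_of_ord j).
case => [|j]; first by apply/card_gt0P; exists (Ordinal n0); rewrite inE /= lrm0.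
rewrite inE /= => /andP [_ lj] E.
suff -> : bs s k = j by [].
by rewrite /bs -E; apply: eq_bigl => i; rewrite inE.
Qed.

Lemma bs_lt s k : 0 < n -> bs s k < n.
Proof.
move=> n0; rewrite /bs; apply: (@leq_ltn_trans n.-1); last lia.
by apply/bigmax_leqP => j _; have := ltn_ord j; lia.
Qed.

Lemma lrm_lt s i j : j < n -> lrm s j -> i < j -> pv s j < pv s i.
Proof. by move=> jn /(lrmP s jn); apply. Qed.

Lemma lrm_below s j : j < n -> exists2 i, i <= j & lrm s i && (pv s i <= pv s j).
Proof.
suff H : forall m j, j <= m -> j < n -> exists2 i, i <= j & lrm s i && (pv s i <= pv s j).
  by apply: H.
elim=> [|m IH] j' hj jn.
  have -> : j' = 0 by lia.
  by apply: (@ex_intro2 _ _ _ 0) => //; rewrite lrm0 leqnn.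
case: (boolP (lrm s j')) => lj; first by apply: (@ex_intro2 _ _ _ j') => //; rewrite lj leqnn.
move: lj; rewrite /lrm negb_forall => /existsP [i]; rewrite negb_imply -leqNgt => /andP [ij hi].
have [i' hi' /andP [li' hpi']] := IH i (ltac:(lia)) (ltn_ord i).
by apply: (@ex_intro2 _ _ _ i'); [lia | apply/andP; split => //; exact: leq_trans hpi' hi].
Qed.

Lemma bs_min s k j : j <= k -> k < n -> pv s (bs s k) <= pv s j.
Proof.
move=> jk kn; have n0 : 0 < n by lia.
have [i ij /andP [li hi]] := lrm_below s (leq_ltn_trans jk kn).
have ib : i <= bs s k by apply: bs_max => //; lia.
rewrite leq_eqVlt in ib; case/orP: ib => [/eqP <- // | ib].
have := lrm_lt (bs_lt s k n0) (bs_lrm s k n0) ib; lia.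
Qed.

Lemma bs_self s k : k < n -> lrm s k -> bs s k = k.
Proof. by move=> kn lk; apply/eqP; rewrite eqn_leq bs_le bs_max. Qed.

Lemma bs_step s k : k.+1 < n -> ~~ lrm s k.+1 -> bs s k.+1 = bs s k.
Proof.
move=> kn nl; have n0 : 0 < n by lia.
apply/eqP; rewrite eqn_leq; apply/andP; split; last first.
  apply: bs_max; [exact: bs_lt | have := bs_le s k; lia | exact: bs_lrm].
have h1 := bs_le s k.+1; have h2 := bs_lrm s k.+1 n0.
have : bs s k.+1 != k.+1 by apply: contraNneq nl => <-.
move=> ne; apply: bs_max; [exact: bs_lt | lia | exact: h2].
Qed.


Definition bsucc s (t : 'I_n) := (t.+1 < n) && ~~ lrm s t.+1.
Definition betaf s (t : 'I_n) : 'I_n := insubd t (if bsucc s t then t.+1 else bs s t).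

Lemma betafE s t : val (betaf s t) = if bsucc s t then t.+1 else bs s t.
Proof.
have n0 : 0 < n by have := ltn_ord t; lia.
rewrite /betaf val_insubd; case hb: (bsucc s t).
  by move: hb; rewrite /bsucc => /andP [h _]; rewrite h.
by rewrite bs_lt.
Qed.

Lemma betaf_inj s : injective (betaf s).
Proof.
move=> a b E; apply: val_inj; have := congr1 val E; rewrite !betafE.
have n0 : 0 < n by have := ltn_ord a; lia.
have key : forall a b : 'I_n, bsucc s a -> ~~ bsucc s b -> a.+1 <> bs s b.
  move=> x y /andP [_ hx] _ E'; have := bs_lrm s y n0; rewrite -E' => h.
  by rewrite h in hx.
have key2 : forall a b : 'I_n, ~~ bsucc s a -> ~~ bsucc s b -> a < b -> bs s a <> bs s b.
  move=> x y hx _ xy E'.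
  have hx1 : x.+1 < n by have := ltn_ord y; lia.
  move: hx; rewrite /bsucc hx1 /= negbK => lx.
  have := @bs_max s y x.+1 hx1 xy lx; have := bs_le s x; lia.
case ha : (bsucc s a); case hb : (bsucc s b).
- by case.
- by move=> E'; exfalso; apply: (key a b); rewrite ?ha ?hb.
- by move=> E'; exfalso; apply: (key b a); rewrite ?ha ?hb.
- move=> E'; case: (ltngtP a b) => // h; exfalso.
    by apply: (key2 a b); rewrite ?ha ?hb.
  by apply: (key2 b a); rewrite ?ha ?hb.
Qed.

Definition beta s : {perm 'I_n} := perm (@betaf_inj s).
Definition Fo s : {perm 'I_n} := (beta s ^ s)%g.

Lemma betaE s t : val (beta s t) = if bsucc s t then t.+1 else bs s t.
Proof. by rewrite permE betafE. Qed.

Lemma betaE' s t : nat_of_ord (beta s t) = if bsucc s t then t.+1 else bs s t.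
Proof. exact: betaE. Qed.

Lemma bs_beta s t : bs s (beta s t) = bs s t.
Proof.
have n0 : 0 < n by have := ltn_ord t; lia.
rewrite betaE; case hb: (bsucc s t).
  by move: hb; rewrite /bsucc => /andP [h1 h2]; rewrite bs_step.
by rewrite bs_self ?bs_lt ?bs_lrm.
Qed.

Lemma bs_betaX s t i : bs s ((beta s ^+ i)%g t) = bs s t.
Proof. by elim: i => [|i IH]; rewrite ?expg0 ?perm1 // expgSr permM bs_beta. Qed.

Lemma beta_reach s t : exists i, val ((beta s ^+ i)%g t) = bs s t.
Proof.
suff H : forall m (u : 'I_n), n - u <= m -> exists i, val ((beta s ^+ i)%g u) = bs s u by apply: (H n); apply: leq_subr.
elim=> [|m IH] u hu; first by have := ltn_ord u; lia.
case hb: (bsucc s u).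
  have u1 : u.+1 < n by move: hb; rewrite /bsucc => /andP [].
  have [i Hi] := IH (beta s u) (ltac:(rewrite betaE hb /=; lia)).
  exists i.+1; rewrite expgS permM Hi bs_beta //.
exists 1; by rewrite expg1 betaE hb.
Qed.

Lemma FoE s t : Fo s (s t) = s (beta s t).
Proof. by rewrite /Fo permJ. Qed.

Lemma FoX s t i : ((Fo s) ^+ i)%g (s t) = s ((beta s ^+ i)%g t).
Proof. by rewrite /Fo -conjXg permJ. Qed.

Lemma Fo_exc s t : ((s t : nat) < (Fo s (s t) : nat)) = asc s t.
Proof.
have n0 : 0 < n by have := ltn_ord t; lia.
rewrite FoE -(pvE s t) -(pvE s (beta s t)) betaE' /asc; case hb: (bsucc s t) => //.
  by move: hb; rewrite /bsucc => /andP [-> _].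
have -> : (pv s t < pv s (bs s t)) = false.
  by apply/negbTE; rewrite -leqNgt; apply: bs_min.
case: (ltnP t.+1 n) => h //=; symmetry; apply/negbTE; rewrite -leqNgt.
move: hb; rewrite /bsucc h /= => /negbFE lt1.
by apply: ltnW; apply: lrm_lt lt1 _.
Qed.

Definition cmin (c : {perm 'I_n}) (x : 'I_n) := [forall y, (y \in porbit c x) ==> (x <= y)].

Lemma pv_inv s (y : 'I_n) : pv s ((s^-1)%g y) = y.
Proof. by rewrite pvE permKV. Qed.

Lemma cmin_lrm s t : cmin (Fo s) (s t) = lrm s t.
Proof.
have n0 : 0 < n by have := ltn_ord t; lia.
apply/idP/idP => [H | lt].
  case: (boolP (lrm s t)) => // nl.
  have [i Hi] := beta_reach s t.
  have := forallP H (((Fo s) ^+ i)%g (s t)); rewrite mem_porbit /= FoX.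
  rewrite -(pvE s t) -pvE Hi => hle.
  have hb := bs_le s t; have hl := bs_lrm s t n0.
  have ne : bs s t != t by apply: contraNneq nl => <-.
  have hm := bs_min s (leqnn t) (ltn_ord t).
  have : pv s (bs s t) != pv s t.
    apply: contra ne => /eqP E; apply/eqP; apply: pv_inj E => //; exact: bs_lt.
  lia.
apply/forallP => y; apply/implyP => /porbitP [i ->]; rewrite FoX.
rewrite -(pvE s t) -pvE -{1}(bs_self (ltn_ord t) lt) -(bs_betaX s t i).
by apply: bs_min.
Qed.

Definition mxc (c : {perm 'I_n}) := \max_(y | cmin c y) (y : nat).

Lemma R0 s : 0 < n -> pv s 0 = mxc (Fo s).
Proof.
move=> n0; apply/eqP; rewrite eqn_leq; apply/andP; split.
  have := @leq_bigmax_cond _ (cmin (Fo s)) (fun y : 'I_n => (y : nat)) (s (Ordinal n0)).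
  by rewrite cmin_lrm lrm0 -(pvE s (Ordinal n0)) => /(_ isT).
apply/bigmax_leqP => y; rewrite -(permKV s y) cmin_lrm => hl.
rewrite -pvE; set u := (s^-1)%g y in hl *.
case: (posnP u) => [-> // | u0].
by apply: ltnW; apply: lrm_lt.
Qed.

Definition nxt (c : {perm 'I_n}) (x : 'I_n) (P : pred nat) :=
  if cmin c (c x) then \max_(y | cmin c y && P y) (y : nat) else (c x : nat).

Lemma R1 s (t : 'I_n) : t.+1 < n ->
  pv s t.+1 = nxt (Fo s) (s t) (fun y => [forall j : 'I_n, (j <= t) ==> (y < pv s j)]).
Proof.
move=> t1; have n0 : 0 < n by lia.
rewrite /nxt FoE cmin_lrm.
have := betaE' s t; case hb: (bsucc s t) => hbt.
  move: hb; rewrite /bsucc t1 /= => nl.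
  have -> : lrm s (beta s t) = false by rewrite hbt; apply/negbTE.
  by rewrite -pvE hbt.
have -> : lrm s (beta s t) by rewrite hbt; apply: bs_lrm.
move: hb; rewrite /bsucc t1 /= => /negbFE l1.
apply/eqP; rewrite eqn_leq; apply/andP; split.
  have := @leq_bigmax_cond _ (fun y => cmin (Fo s) y && [forall j : 'I_n, (j <= t) ==> (y < pv s j)])
     (fun y : 'I_n => (y : nat)) (s (Ordinal t1)).
  rewrite cmin_lrm l1 /= -(pvE s (Ordinal t1)); apply.
  apply/forallP => j; apply/implyP => jt.
  by apply: lrm_lt; rewrite // ltnS.
apply/bigmax_leqP => y /andP []; rewrite -(permKV s y) cmin_lrm => hl /forallP hf.
rewrite -pvE; set u := (s^-1)%g y in hl hf *.
case: (ltnP t u) => tu.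
  rewrite leq_eqVlt in tu; case/orP: tu => [/eqP <- // | tu].
  by apply: ltnW; apply: lrm_lt.
by have := implyP (hf u) tu; rewrite pvE ltnn.
Qed.

Lemma eq_nxt c x (P Q : pred nat) : P =1 Q -> nxt c x P = nxt c x Q.
Proof. by move=> EPQ; rewrite /nxt; case: ifP => // _; apply: eq_bigl => y; rewrite EPQ. Qed.

Lemma Fo_inj : injective Fo.
Proof.
move=> s s' E.
suff H : forall k, k < n -> forall j, j <= k -> pv s j = pv s' j.
  apply/permP => t; apply: val_inj => /=.
  by rewrite -!pvE; apply: (H t) => //.
elim=> [|k IH] hk j hj.
  have -> : j = 0 by lia.
  by rewrite !R0 ?E //; lia.
rewrite leq_eqVlt in hj; case/orP: hj => [/eqP -> | hj]; last first.
  by apply: IH; lia.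
have kn : k < n by lia.
rewrite (@R1 s (Ordinal kn) hk) (@R1 s' (Ordinal kn) hk) E.
have -> : s (Ordinal kn) = s' (Ordinal kn).
  by apply: val_inj => /=; rewrite -!pvE; apply: IH.
apply: eq_nxt => y; apply: eq_forallb => i; case: (leqP i k) => //= ik.
by rewrite IH.
Qed.
Definition ab s (x : 'I_n) := asc s ((s^-1)%g x).
Definition Pk k (c : {perm 'I_n}) :=
  [forall i : 'I_n, (i < n.-1) ==> ((i < c i) == (i < k))].

Lemma Fo_exc' s (x : 'I_n) : ((x : nat) < (Fo s x : nat)) = ab s x.
Proof. by rewrite /ab -Fo_exc permKV. Qed.

Lemma ab_s s t : ab s (s t) = asc s t.
Proof. by rewrite /ab permK. Qed.

Lemma ab_last s (x : 'I_n) : (x : nat) = n.-1 -> ab s x = false.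
Proof.
move=> hx; rewrite /ab /asc; apply/negbTE; apply/negP => /andP [h1 h2].
have := pv_lt s h1; move: h2; rewrite pv_inv hx; lia.
Qed.

Lemma Pk_ab s k : k < n -> Pk k (Fo s) -> forall x : 'I_n, ab s x = (x < k).
Proof.
move=> kn /forallP H x; case: (ltnP x n.-1) => hx.
  by have := implyP (H x) hx; rewrite Fo_exc' => /eqP.
have ex : (x : nat) = n.-1 by have := ltn_ord x; lia.
by rewrite ab_last //; apply/esym/negbTE; lia.
Qed.

Lemma ab_cls1 s k : (forall x : 'I_n, ab s x = (x < k)) -> cls1 s.
Proof.
move=> H; apply/cls1P; split.
  move=> a b ha hb.
  have la : a < n by case/andP: ha; lia.
  have lb : b < n by case/andP: hb; lia.
  have := H (s (Ordinal la)); rewrite ab_s ha -pvE /= => /esym h1.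
  have := H (s (Ordinal lb)); rewrite ab_s -pvE /=.
  have -> : asc s b = false by move: hb; rewrite /asc /des; lia.
  lia.
move=> a ha; have la : a < n by case/andP: ha; lia.
have ln : n.-1 < n by lia.
have := H (s (Ordinal la)); rewrite ab_s ha -pvE /= => /esym h1.
have := H (s (Ordinal ln)); rewrite ab_s -pvE /=.
have -> : asc s n.-1 = false by rewrite /asc; lia.
lia.
Qed.

Lemma ab_down s (x y : 'I_n) : cls1 s -> ab s x -> (y : nat) < x -> ab s y.
Proof.
move=> /cls1P [H1 H2] hx yx; apply/negPn/negP => hy.
move: hx hy; rewrite /ab.
set t := (s^-1)%g x; set u := (s^-1)%g y => ht hu.
have ex : pv s t = x by rewrite pv_inv.
have ey : pv s u = y by rewrite pv_inv.
case: (ltnP u.+1 n) => hun.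
  have hd : des s u.
    rewrite /des hun /=; move: hu; rewrite /asc hun /= -leqNgt leq_eqVlt => /orP [/eqP E | //].
    by have := pv_inj hun (ltn_ord u) E; lia.
  have := H1 _ _ ht hd; lia.
have eu : (u : nat) = n.-1 by have := ltn_ord u; lia.
have := H2 _ ht; rewrite -eu; lia.
Qed.

Lemma ab_Pk s k : (forall x : 'I_n, ab s x = (x < k)) -> Pk k (Fo s).
Proof.
by move=> H; apply/forallP => i; apply/implyP => _; rewrite Fo_exc' H.
Qed.

Lemma cls1_ex s : 0 < n -> cls1 s -> exists2 k, k < n & Pk k (Fo s).
Proof.
move=> n0 hc.
have exP : exists m, [exists o : 'I_n, (nat_of_ord o == m) && ~~ ab s o].
  exists n.-1; apply/existsP; exists (Ordinal (ltac:(lia) : n.-1 < n)).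
  by rewrite eqxx ab_last.
case: (ex_minnP exP) => k /existsP [o /andP [/eqP ok hno]] kmin.
exists k; first by rewrite -ok.
apply: ab_Pk => x; case: (ltnP x k) => xk.
  case hx: (ab s x) => //; have := kmin x; rewrite leqNgt xk; apply.
  by apply/existsP; exists x; rewrite eqxx hx.
case hx: (ab s x) => //; exfalso; apply: (negP hno).
rewrite leq_eqVlt -ok in xk; case/orP: xk => [/eqP E | lt].
  by have -> : o = x by apply: val_inj.
exact: ab_down hc hx lt.
Qed.

Lemma Pk_uniq s k k' : k < n -> k' < n -> Pk k (Fo s) -> Pk k' (Fo s) -> k = k'.
Proof.
move=> kn kn' h h'; have H := Pk_ab kn h; have H' := Pk_ab kn' h'.
case: (ltngtP k k') => // lt.
  have := H (Ordinal kn); rewrite H' /= ltnn lt //.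
have := H' (Ordinal kn'); rewrite H /= ltnn lt //.
Qed.
End Foata.

Lemma card_setE (T : finType) (P : pred T) : #|[set x | P x]| = \sum_x (P x : nat).
Proof.
rewrite -sum1_card big_mkcond /=; apply: eq_bigr => x _; rewrite inE.
by case: (P x).
Qed.

Lemma card_cls1 n : 0 < n -> #|[set s : {perm 'I_n} | cls1 s]| = \sum_(k < n) bacount n k.
Proof.
move=> n0.
have Eb (k : 'I_n) : bacount n k = #|[set s : {perm 'I_n} | Pk k (Fo s)]|.
  transitivity #|[set c : {perm 'I_n} | Pk k c]|.
    by apply: eq_card => c; rewrite !inE.
  have h := card_preimset [set c : {perm 'I_n} | Pk k c] (@Fo_inj n).
  by rewrite -h; apply: eq_card => s; rewrite !inE.
rewrite (eq_bigr _ (fun k _ => Eb k)).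
under eq_bigr do rewrite card_setE.
rewrite exchange_big card_setE /=; apply: eq_bigr => s _.
case hc: (cls1 s).
  have [k0 k0n hk0] := cls1_ex n0 hc.
  rewrite (bigD1 (Ordinal k0n)) //= hk0 big1 // => k hk.
  case hP: (Pk k (Fo s)) => //.
  by move: hk; rewrite -val_eqE /= (Pk_uniq (ltn_ord k) k0n hP hk0) eqxx.
rewrite big1 // => k _; case hP: (Pk k (Fo s)) => //.
by have := ab_cls1 (Pk_ab (ltn_ord k) hP); rewrite hc.
Qed.


Theorem lemma1p6 (n : nat) (hn : (1 <= n)%N) :
  #|Cstar n.+1| = (\sum_(k < n) bacount n k)%N /\
  [/\ (#|Cstar n.+1| <= alpha n)%N,
      (alpha n <= #|Cstar n.+1| + #|Cstar n.+2|)%N &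
      (#|Cstar n.+1| + #|Cstar n.+2| <= 2 * #|Cstar n.+2|)%N].
Proof.
rewrite !card_Cstar; split; first exact: card_cls1.
split.
- exact: cls1_sep.
- exact: alpha_le.
- by rewrite mul2n -addnn leq_add2r; apply: cls1_le.
Qed.
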